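(* Let $n\ge 5$, $k\ge 1$, and $0\le h\le n$. Let $\mathcal{G}^4_{n,h}$ be a graph obtained from $\mathcal{G}^4_n$ by deleting any $h$ of the $n$ links of the form $\{i,i+2 \pmod n\}$. Then $$\lceil h/2\rceil \;\le\; M^{\mathcal{G}^4_{n,h}}_{k,n}\;\le\; 2M^C_{k,\lceil n/2\rceil}+h+2 .$$
   Context: $\mathcal{G}^4_n$ is the graph on $\{1,\dots,n\}$ in which each node $i$ is adjacent to $i\pm1$ and $i\pm2\pmod n$. For a graph $G$ on $\{1,\dots,n\}$, a measurement matrix for $G$ is a matrix $A\in\{0,1\}^{m\times n}$ in which every nonzero row has a support that induces a connected subgraph of $G$. A vector is $k$-sparse if it has at most $k$ nonzero entries. $A$ identifies all $k$-sparse vectors if $Ax_1\ne Ax_2$ for every two distinct $k$-sparse $x_1,x_2\in\mathbb{R}^n$. $M^G_{k,n}$ is the minimum number of rows of a measurement matrix for $G$ that identifies all $k$-sparse vectors. $M^C_{k,N}$ is the minimum number of rows of an arbitrary $0$-$1$ matrix with $N$ columns that identifies all $k$-sparse vectors in $\mathbb{R}^N$. *)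

(* Defs.v *)
From HB Require Import structures.
From mathcomp Require Import all_boot all_order all_algebra.
From Stdlib Require Import ClassicalEpsilon.
Set Implicit Arguments. Unset Strict Implicit. Unset Printing Implicit Defensive.
Import Order.TTheory GRing.Theory Num.Theory.
Local Open Scope ring_scope.

(* Nodes {1,...,n} are represented by 'I_n = {0,...,n-1}. *)

(* The graph G^4_n with the links {i, i+2 mod n} for i in D removed
   (D is the set of deleted "distance-2" links, indexed by their first
   endpoint i). *)
Definition G4del (n : nat) (D : {set 'I_n}) : rel 'I_n :=
  fun i j =>
    [|| (val j == (val i + 1) %% n)%N, (val i == (val j + 1) %% n)%N,
        ((val j == (val i + 2) %% n)%N && (i \notin D))
      | ((val i == (val j + 2) %% n)%N && (j \notin D))].

Definition ksparse (R : nzRingType) (n k : nat) (x : 'cV[R]_n) : Prop :=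
  leq #|[set j : 'I_n | x j ord0 != 0]| k.

Definition identifies (R : nzRingType) (m n k : nat) (A : 'M[R]_(m, n)) : Prop :=
  forall x1 x2 : 'cV[R]_n, ksparse k x1 -> ksparse k x2 -> x1 != x2 ->
    A *m x1 != A *m x2.

Definition zero_one (R : nzRingType) (m n : nat) (A : 'M[R]_(m, n)) : Prop :=
  forall i j, A i j = 0 \/ A i j = 1.

Definition row_support (R : nzRingType) (m n : nat) (A : 'M[R]_(m, n)) (i : 'I_m)
  : {set 'I_n} := [set j | A i j != 0].

Definition induces_connected (n : nat) (e : rel 'I_n) (S : {set 'I_n}) : Prop :=
  forall x y, x \in S -> y \in S ->
    connect (fun u v => [&& e u v, u \in S & v \in S]) x y.

Definition measurement_matrix (R : nzRingType) (m n : nat) (e : rel 'I_n)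
  (A : 'M[R]_(m, n)) : Prop :=
  zero_one A /\
  forall i, row_support A i != set0 -> induces_connected e (row_support A i).

Definition bool_of (P : Prop) : bool :=
  if excluded_middle_informative P then true else false.

Definition MG_pred (R : nzRingType) (n : nat) (e : rel 'I_n) (k : nat) : pred nat :=
  fun m => bool_of (exists A : 'M[R]_(m, n), measurement_matrix e A /\ identifies k A).

Definition MC_pred (R : nzRingType) (k N : nat) : pred nat :=
  fun m => bool_of (exists A : 'M[R]_(m, N), zero_one A /\ identifies k A).

Lemma bool_ofT (P : Prop) : P -> bool_of P.
Proof. by rewrite /bool_of; case: excluded_middle_informative. Qed.

Lemma id_zero_one (R : nzRingType) n : zero_one (1%:M : 'M[R]_n).
Proof. by move=> i j; rewrite mxE; case: (i == j); [right|left]. Qed.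

Lemma id_identifies (R : nzRingType) n k : identifies k (1%:M : 'M[R]_n).
Proof. by move=> x1 x2 _ _; rewrite !mul1mx. Qed.

Lemma MG_exists (R : nzRingType) (n : nat) (e : rel 'I_n) k :
  exists m, MG_pred R e k m.
Proof.
exists n; apply: bool_ofT; exists 1%:M; split; last exact: id_identifies.
split; first exact: id_zero_one.
move=> i _ x y; rewrite !inE !mxE.
case: (eqVneq i x) => [<-|]; last by rewrite eqxx.
case: (eqVneq i y) => [<-|]; last by rewrite eqxx.
by rewrite connect0.
Qed.

Lemma MC_exists (R : nzRingType) k N : exists m, MC_pred R k N m.
Proof.
exists N; apply: bool_ofT; exists 1%:M; split;
  [exact: id_zero_one | exact: id_identifies].
Qed.

Definition MG (R : nzRingType) (n : nat) (e : rel 'I_n) (k : nat) : nat :=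
  ex_minn (MG_exists R e k).

Definition MC (R : nzRingType) (k N : nat) : nat := ex_minn (MC_exists R k N).

(* Main.v *)
Require Import Defs.
From HB Require Import structures.
From mathcomp Require Import all_boot all_order all_algebra.
From mathcomp Require Import zify.
From Stdlib Require Import ClassicalEpsilon.
Set Implicit Arguments. Unset Strict Implicit. Unset Printing Implicit Defensive.
Import GRing.Theory.

Definition dist (n x u : nat) := if (x <= u)%N then u - x else u + n - x.

Lemma modS1 n u : u < n -> u.+1 %% n = if u.+1 < n then u.+1 else u.+1 - n.
Proof.
move=> un; case: ltnP => h; first by rewrite modn_small.
have -> : u.+1 = (u.+1 - n) + n by lia.
by rewrite modnDr modn_small; lia.
Qed.

Lemma modS2 n u : 1 < n -> u < n -> u.+2 %% n = if u.+2 < n then u.+2 else u.+2 - n.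
Proof.
move=> n1 un; case: ltnP => h; first by rewrite modn_small.
have -> : u.+2 = (u.+2 - n) + n by lia.
by rewrite modnDr modn_small; lia.
Qed.

Lemma side1 n x y u : x < n -> y < n -> u < n -> x != y -> u != x -> u != y ->
  (u.+1 %% n) != x -> (u.+1 %% n) != y ->
  (dist n x u < dist n x y) = (dist n x (u.+1 %% n) < dist n x y).
Proof.
move=> xn yn un; rewrite (modS1 un) /dist.
case: ifP; case: ifP; case: ifP; case: ifP => *; apply/idP/idP => ?; lia.
Qed.

Lemma side2 n x y u : 1 < n -> x < n -> y < n -> u < n -> x != y -> u != x -> u != y ->
  (u.+1 %% n) != x -> (u.+1 %% n) != y ->
  (u.+2 %% n) != x -> (u.+2 %% n) != y ->
  (dist n x u < dist n x y) = (dist n x (u.+2 %% n) < dist n x y).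
Proof.
move=> n1 xn yn un; rewrite (modS1 un) (modS2 n1 un) /dist.
case: ifP; case: ifP; case: ifP; case: ifP; case: ifP => *; apply/idP/idP => ?; lia.
Qed.



Lemma pair_in n a b x y : a < n -> b < n -> x < n -> y < n ->
  a != b -> x != a -> y != b -> b != x -> a != y ->
  dist n a x <= dist n a b -> dist n a x <= dist n a y ->
  dist n b y <= dist n b a -> dist n b y <= dist n b x ->
  [/\ x != y, dist n x b < dist n x y & ~~ (dist n x a < dist n x y)].
Proof.
rewrite /dist; do !case: ifP => ?; move=> *; split.
all: try (apply/negP; lia).
all: try lia.

Qed.
Lemma pair_out n a b x y : a < n -> b < n -> x < n -> y < n ->
  x != y -> a != x -> b != y -> a != y -> b != x ->
  dist n x a <= dist n x y -> dist n y b <= dist n y x ->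
  dist n x a < dist n x y /\ ~~ (dist n x b < dist n x y).
Proof.
rewrite /dist; do !case: ifP => ?; move=> *; split.
all: try (apply/negP; lia).
all: try lia.
Qed.


Lemma bool_ofP (P : Prop) : bool_of P -> P.
Proof. by rewrite /bool_of; case: excluded_middle_informative. Qed.

Lemma G4del_sym n (D : {set 'I_n}) : symmetric (G4del D).
Proof. by move=> i j; rewrite /G4del orbCA [X in _ || (_ || X)]orbC. Qed.

Section Lower.
Variables (n : nat) (D : {set 'I_n}).
Hypothesis n5 : 4 < n.

Definition Cen := [set ordS i | i in D].

Lemma card_Cen : #|Cen| = #|D|.
Proof. by rewrite card_imset //; exact: ordS_inj. Qed.

Lemma Cen_pred (c u : 'I_n) : c \in Cen -> val c = u.+1 %% n -> u \in D.
Proof.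
case/imsetP => i iD -> h; have : ordS u = ordS i by apply: val_inj; exact: (esym h).
by move/ordS_inj => ->.
Qed.

Definition sd (x y u : 'I_n) := dist n x u < dist n x y.

Lemma edge_side (x y u v : 'I_n) : x \in Cen -> y \in Cen -> x != y ->
  u != x -> u != y -> v != x -> v != y -> G4del D u v -> sd x y u = sd x y v.
Proof.
move=> xC yC xy ux uy vx vy.
have xn := ltn_ord x; have yn := ltn_ord y; have un := ltn_ord u; have vn := ltn_ord v.
have nat_ne (a b : 'I_n) : a != b -> val a != val b by [].
have xy' := nat_ne _ _ xy; have ux' := nat_ne _ _ ux; have uy' := nat_ne _ _ uy.
have vx' := nat_ne _ _ vx; have vy' := nat_ne _ _ vy.
have cenne (w : 'I_n) : w \notin D -> forall c, c \in Cen -> w.+1 %% n != val c.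
  move=> wD c cC; apply/eqP => h; move: wD; rewrite (Cen_pred cC (esym h)) //.
rewrite /sd /G4del !addn1 !addn2.
case/or4P => [/eqP e|/eqP e|/andP[/eqP e uD]|/andP[/eqP e vD]].
- by rewrite e; apply: side1 => //; rewrite -e.
- by rewrite e; symmetry; apply: side1 => //; rewrite -e.
- transitivity (dist n x (u.+2 %% n) < dist n x y); last by rewrite e.
  apply: side2 => //; [lia | exact: cenne | exact: cenne | by rewrite -e | by rewrite -e].
- transitivity (dist n x (v.+2 %% n) < dist n x y); first by rewrite e.
  symmetry; apply: side2 => //; [lia | exact: cenne | exact: cenne | by rewrite -e | by rewrite -e].
Qed.
End Lower.


Section Lower2.
Variables (n : nat) (D : {set 'I_n}).
Hypothesis n5 : 4 < n.
Notation Cen := (Cen D).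
Notation sd := (@sd n).

Definition other (c : 'I_n) := odflt c [pick c' in Cen :\ c].
Definition next (c : 'I_n) := [arg min_(c' < other c in Cen :\ c) dist n c c'].

Lemma nextP c : c \in Cen -> 1 < #|Cen| ->
  [/\ next c \in Cen, next c != c &
   forall c', c' \in Cen -> c' != c -> dist n c (next c) <= dist n c c'].
Proof.
move=> cC C1.
have oC : other c \in Cen :\ c.
  rewrite /other; case: pickP => [c' //| h].
  have : 0 < #|Cen :\ c| by move: C1; rewrite (cardsD1 c) cC; lia.
  by rewrite card_gt0 => /set0Pn[z]; rewrite h.
rewrite /next; case: arg_minnP => // d; rewrite !inE => /andP[dc dC] dmin.
split => // c' c'C c'c; apply: dmin; by rewrite !inE c'c c'C.
Qed.

Variable S : {set 'I_n}.
Hypothesis conn : forall a b, a \in S -> b \in S ->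
  connect (fun u v => [&& G4del D u v, u \in S & v \in S]) a b.
Hypothesis C1 : 1 < #|Cen|.

Lemma sep_sides (a b x y : 'I_n) : x \in Cen -> y \in Cen -> x != y ->
  a \in S -> b \in S -> x \notin S -> y \notin S -> sd x y a != sd x y b -> False.
Proof.
move=> xC yC xy aS bS xS yS; move: (conn aS bS) => /connectP[p pth ->].
have nS w : w \in S -> (w != x) && (w != y).
  by move=> wS; apply/andP; split; apply/eqP => e; move: wS; rewrite e ?(negbTE xS) ?(negbTE yS).
elim: p a aS pth => [|w p IH] a aS /=; first by rewrite eqxx.
case/andP => /and3P[e _ wS] pth.
move/andP: (nS _ aS) => [ax ay]; move/andP: (nS _ wS) => [wx wy].
by rewrite (edge_side n5 xC yC xy ax ay wx wy e); apply: IH.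
Qed.

Lemma sep_pair c c' : c \in Cen -> c' \in Cen -> c != c' ->
  (c \in S) != (next c \in S) -> (c' \in S) != (next c' \in S) ->
  (c \in S) = (c' \in S) -> False.
Proof.
move=> cC c'C cc' s1 s2 e.
have [nC nc nmin] := nextP cC C1; have [n'C n'c n'min] := nextP c'C C1.
have nat_ne (u v : 'I_n) : u != v -> val u != val v by [].
have ne_S (u v : 'I_n) : u \in S -> v \notin S -> u != v.
  by move=> uS vS; apply/eqP => ev; move: vS; rewrite -ev uS.
have sc : c' != c by rewrite eq_sym.
have ne_S2 (u v : 'I_n) : u \in S -> v \notin S -> v != u.
  by move=> uS vS; rewrite eq_sym; apply: ne_S.
case cS: (c \in S) e s1 s2 => e s1 s2.
- have nS : next c \notin S by move: s1; case: (next c \in S).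
  have c'S : c' \in S by rewrite -e.
  have n'S : next c' \notin S by move: s2; rewrite c'S; case: (next c' \in S).
  have [xy sb sa] := pair_in (ltn_ord c) (ltn_ord c') (ltn_ord (next c)) (ltn_ord (next c'))
    (nat_ne _ _ cc') (nat_ne _ _ nc) (nat_ne _ _ n'c) (nat_ne _ _ (ne_S _ _ c'S nS))
    (nat_ne _ _ (ne_S _ _ cS n'S))
    (nmin _ c'C sc) (nmin _ n'C (ne_S2 _ _ cS n'S)) (n'min _ cC cc')
    (n'min _ nC (ne_S2 _ _ c'S nS)).
  apply: (sep_sides nC n'C xy cS c'S nS n'S).
  by rewrite /sd (negbTE sa) sb.
- have nS : next c \in S by move: s1; case: (next c \in S).
  have c'S : c' \notin S by rewrite -e.
  have n'S : next c' \in S by move: s2; rewrite (negbTE c'S); case: (next c' \in S).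
  have cS' : c \notin S by rewrite cS.
  have [sa sb] := pair_out (ltn_ord (next c)) (ltn_ord (next c')) (ltn_ord c) (ltn_ord c')
    (nat_ne _ _ cc') (nat_ne _ _ nc) (nat_ne _ _ n'c) (nat_ne _ _ (ne_S _ _ nS c'S))
    (nat_ne _ _ (ne_S _ _ n'S cS')) (nmin _ c'C sc) (n'min _ cC cc').
  apply: (sep_sides cC c'C cc' nS n'S cS' c'S).
  by rewrite /sd (negbTE sb) sa.
Qed.

Lemma sep_le2 : #|[set c in Cen | (c \in S) != (next c \in S)]| <= 2.
Proof.
rewrite leqNgt; apply/negP => /card_gt2P [c1 [c2 [c3 [[h1 h2 h3] [d12 d23 d31]]]]].
move: h1 h2 h3; rewrite !inE => /andP[C1' s1] /andP[C2' s2] /andP[C3' s3].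
case E1: (c1 \in S); case E2: (c2 \in S); case E3: (c3 \in S).
all: first [ apply: (sep_pair C1' C2' d12 s1 s2); by rewrite E1 E2
           | apply: (sep_pair C2' C3' d23 s2 s3); by rewrite E2 E3
           | apply: (sep_pair C3' C1' d31 s3 s1); by rewrite E3 E1 ].
Qed.
End Lower2.

Section L5sec.
Local Open Scope ring_scope.

Lemma card_bigcup_le (T : finType) m (F : 'I_m -> {set T}) :
  (#|\bigcup_(r < m) F r| <= \sum_(r < m) #|F r|)%N.
Proof.
elim: m F => [|m IH] F; first by rewrite !big_ord0 cards0.
rewrite !big_ord_recr /=; apply: leq_trans (leq_card_setU _ _).1 _.
by rewrite leq_add2r.
Qed.

Definition delta_col (R : nzRingType) n (j : 'I_n) : 'cV[R]_n := \col_i (i == j)%:R.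

Lemma mul_delta (R : nzRingType) m n (A : 'M[R]_(m, n)) j :
  A *m delta_col R j = col j A.
Proof.
apply/matrixP => r z; rewrite !mxE (bigD1 j) //= big1 => [|i ij].
  by rewrite mxE eqxx mulr1 addr0.
by rewrite mxE (negbTE ij) mulr0.
Qed.

Lemma col_diff (R : realFieldType) m n k (A : 'M[R]_(m, n)) : (1 <= k)%N ->
  identifies k A -> forall j1 j2 : 'I_n, j1 != j2 -> exists r, A r j1 != A r j2.
Proof.
move=> k1 idA j1 j2 j12.
have sp (j : 'I_n) : ksparse k (delta_col R j).
  rewrite /ksparse; apply: leq_trans k1.
  have -> : [set i | delta_col R j i ord0 != 0] = [set j].
    by apply/setP => i; rewrite !inE mxE; case: (i == j); rewrite ?oner_neq0 ?eqxx.
  by rewrite cards1.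
have d12 : delta_col R j1 != delta_col R j2.
  apply/negP => /eqP/matrixP/(_ j1 ord0); rewrite !mxE eqxx (negbTE j12).
  by move/eqP; rewrite oner_eq0.
have := idA _ _ (sp j1) (sp j2) d12; rewrite !mul_delta.
case: (pickP (fun r => A r j1 != A r j2)) => [r h|h]; first by exists r.
case/negP; apply/eqP/matrixP => r z; rewrite !mxE.
by move: (h r) => /= /negbFE/eqP.
Qed.

Lemma lower_main (R : realFieldType) n (D : {set 'I_n}) k m (A : 'M[R]_(m, n)) :
  (4 < n)%N -> (1 <= k)%N -> measurement_matrix (G4del D) A -> identifies k A ->
  (#|D| <= 2 * m)%N.
Proof.
move=> n5 k1 [zo conn] idA.
have cd := col_diff k1 idA.
have m0 : (0 < m)%N.
  have n0 : (0 < n)%N by lia.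
  have n1 : (1 < n)%N by lia.
  have [r _] := cd (Ordinal n0) (Ordinal n1) isT.
  by case: m r {A zo conn idA cd} => [[]|].
have [Dle|Dgt] := leqP #|D| 2; first by lia.
have C1 : (1 < #|Cen D|)%N by rewrite card_Cen; lia.
pose Sep (r : 'I_m) := [set c in Cen D | (c \in row_support A r) != (next D c \in row_support A r)].
have sub : Cen D \subset \bigcup_(r < m) Sep r.
  apply/subsetP => c cC; have [nC nc _] := nextP n5 cC C1.
  have [r hr] : exists r, A r c != A r (next D c) by apply: cd; rewrite eq_sym.
  apply/bigcupP; exists r => //; rewrite inE cC /= /row_support !inE.
  by case: (zo r c) (zo r (next D c)) hr => -> [->|->]; rewrite ?eqxx ?oner_eq0.
have le2 r : (#|Sep r| <= 2)%N.
  apply: sep_le2 => // a b aS bS; apply: conn => //; apply/set0Pn; by exists a.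
rewrite -card_Cen; apply: leq_trans (subset_leq_card sub) _.
apply: leq_trans (card_bigcup_le _) _.
apply: (@leq_trans (\sum_(r < m) 2)%N); first by apply: leq_sum => r _; exact: le2.
by rewrite sum_nat_const card_ord mulnC.
Qed.

End L5sec.

Section Conn.
Variables (n : nat) (D : {set 'I_n}).
Hypothesis n5 : 4 < n.

Lemma G4_succ (u v : 'I_n) : nat_of_ord v = (nat_of_ord u).+1 %% n -> G4del D u v.
Proof. by move=> h; rewrite /G4del addn1 -h eqxx. Qed.

Lemma G4_two (u v : 'I_n) : nat_of_ord v = (nat_of_ord u).+2 %% n -> u \notin D -> G4del D u v.
Proof. by move=> h uD; rewrite /G4del addn2 -h eqxx uD !orbT. Qed.

Definition Par (q : bool) := [set j : 'I_n | odd j == q].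

Lemma conn_big (q : bool) (S : {set 'I_n}) : Par q \subset S -> Cen D \subset S ->
  induces_connected (G4del D) S.
Proof.
move=> /subsetP PS /subsetP CS.
pose er := fun u v => [&& G4del D u v, u \in S & v \in S].
have ersym : connect_sym er.
  apply: sym_connect_sym => u v; rewrite /er G4del_sym.
  by case: (u \in S); case: (v \in S); rewrite ?andbF.
have q_lt : q < n by apply: leq_ltn_trans (leq_b1 q) _; lia.
pose r0 : 'I_n := Ordinal q_lt.
have stepA : forall a : 'I_n, odd a = q -> connect er r0 a.
  move=> a; have [N] := ubnP (nat_of_ord a); elim: N a => [//|N IH] a aN aq.
  have [a2|a2] := ltnP (nat_of_ord a) 2.
    have -> : a = r0.
      apply: val_inj => /=; case: a aN aq a2 => [[|[|v]] ap] /= _ aq a2 //; by rewrite -aq.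
    exact: connect0.
  have an : nat_of_ord a < n := ltn_ord a.
  have bn : nat_of_ord a - 2 < n by lia.
  pose b : 'I_n := Ordinal bn.
  have bq : odd b = q.
    rewrite /= -aq; have -> : nat_of_ord a = (nat_of_ord a - 2) + 2 by lia.
    by rewrite addnK oddD /= addbF.
  have bS : b \in S by apply: PS; rewrite inE bq.
  have aS : a \in S by apply: PS; rewrite inE aq.
  apply: connect_trans (IH b _ bq) _; first by rewrite /=; lia.
  have ab2 : nat_of_ord a = (nat_of_ord b).+2 %% n by rewrite modn_small /=; lia.
  case bD: (b \in D).
  - pose c := ordS b.
    have cC : c \in Cen D by apply/imsetP; exists b.
    have cS : c \in S by apply: CS.
    have cv : nat_of_ord c = (nat_of_ord b).+1 %% n by [].
    have cv' : nat_of_ord c = (nat_of_ord b).+1 by rewrite cv modn_small /=; lia.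
    apply: (@connect_trans _ _ c); apply: connect1; rewrite /er ?bS ?cS ?aS /= ?andbT.
    + exact: G4_succ.
    + by apply: G4_succ; rewrite cv' ab2.
  - apply: connect1; rewrite /er bS aS /= andbT; apply: (G4_two ab2); by rewrite bD.
have stepB : forall x, x \in S -> connect er r0 x.
  move=> x xS; case xq: (odd x == q); first by apply: stepA; apply/eqP.
  have xn : nat_of_ord x < n := ltn_ord x.
  have [x0|x0] := posnP (nat_of_ord x).
  - have q1 : q = true by move: xq; rewrite x0; case: (q) => // /eqP.
    have on : 1 < n by lia.
    pose y : 'I_n := Ordinal on.
    have yq : odd y = q by rewrite q1.
    apply: connect_trans (stepA y yq) (connect1 _).
    rewrite /er xS (PS y) ?inE ?yq //= andbT G4del_sym; apply: G4_succ.
    by rewrite x0 /= modn_small //; lia.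
  - have yn : nat_of_ord x - 1 < n by lia.
    pose y : 'I_n := Ordinal yn.
    have yq : odd y = q.
      move/negbT: xq; rewrite /=; have -> : nat_of_ord x = (nat_of_ord x - 1) + 1 by lia.
      by rewrite addnK oddD /= addbT; case: (odd _); case: (q).
    apply: connect_trans (stepA y yq) (connect1 _).
    rewrite /er xS (PS y) ?inE ?yq //= andbT; apply: G4_succ.
    rewrite /= modn_small; lia.
move=> x y xS yS; apply: (@connect_trans _ _ r0); last exact: stepB.
by rewrite ersym; apply: stepB.
Qed.
End Conn.


Section Upper.
Local Open Scope ring_scope.
Variables (R : realFieldType) (n : nat) (D : {set 'I_n}) (k ME : nat).
Hypothesis n5 : (4 < n)%N.
Local Notation N := (uphalf n).
Variable B : 'M[R]_(ME, N).
Hypothesis zoB : zero_one B.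
Hypothesis idB : identifies k B.

Lemma half_lt (j : 'I_n) : (j./2 < N)%N.
Proof.
rewrite uphalfE; have := half_leq (_ : (j.+2 <= n.+1)%N); apply; exact: ltn_ord.
Qed.
Definition hf (j : 'I_n) : 'I_N := Ordinal (half_lt j).

Lemma hf_inj (i j : 'I_n) : odd i = odd j -> hf i = hf j -> i = j.
Proof.
move=> oij /(congr1 val) /= hij; apply: val_inj => /=.
by rewrite -(odd_double_half i) -(odd_double_half j) oij hij.
Qed.

Definition T q t := [set j : 'I_n | (odd j == q) && (B t (hf j) == 1)].
Definition rowM q t := Par n (~~ q) :|: Cen D :|: T q t.
Definition base q := Par n (~~ q) :|: Cen D.
Definition rows := [seq rowM false t | t <- enum 'I_ME] ++
  [seq rowM true t | t <- enum 'I_ME] ++ [:: base false; base true] ++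
  [seq [set c] | c <- enum (Cen D)].
Definition Am : 'M[R]_(size rows, n) := \matrix_(r, j) ((j \in nth set0 rows r)%:R).

Lemma rowM_in q t : rowM q t \in rows.
Proof. by rewrite !mem_cat; case: q; rewrite map_f ?mem_enum ?orbT. Qed.
Lemma base_in q : base q \in rows.
Proof. by rewrite !mem_cat !inE; case: q; rewrite eqxx ?orbT. Qed.
Lemma sing_in c : c \in Cen D -> [set c] \in rows.
Proof. by move=> cC; rewrite !mem_cat map_f ?mem_enum ?orbT. Qed.

Lemma rows_conn S : S \in rows -> induces_connected (G4del D) S.
Proof.
rewrite !mem_cat !inE => /or4P[| |/orP[]|].
- case/mapP => t _ ->; apply: (@conn_big _ _ n5 true).
  + by rewrite /rowM -setUA subsetUl.
  + by rewrite /rowM -setUA setUCA subsetUl.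
- case/mapP => t _ ->; apply: (@conn_big _ _ n5 false).
  + by rewrite /rowM -setUA subsetUl.
  + by rewrite /rowM -setUA setUCA subsetUl.
- move/eqP ->; apply: (@conn_big _ _ n5 true); rewrite /base ?subsetUl ?subsetUr //.
- move/eqP ->; apply: (@conn_big _ _ n5 false); rewrite /base ?subsetUl ?subsetUr //.
- case/mapP => c _ -> x y; rewrite !inE => /eqP -> /eqP ->; exact: connect0.
Qed.

Lemma row_supp_Am r : row_support Am r = nth set0 rows r.
Proof.
apply/setP => j; rewrite !inE mxE.
by case: (j \in _); rewrite ?oner_eq0 ?eqxx.
Qed.

Lemma Am_mm : measurement_matrix (G4del D) Am.
Proof.
split.
  by move=> r j; rewrite mxE; case: (j \in _); [right|left].
move=> r _; rewrite row_supp_Am; apply: rows_conn; exact: mem_nth.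
Qed.

Lemma z_rows (z : 'cV[R]_n) : Am *m z = 0 ->
  forall S, S \in rows -> \sum_j (j \in S)%:R * z j ord0 = 0.
Proof.
move=> h S /(nthP set0) [r rs <-].
transitivity ((Am *m z) (Ordinal rs) ord0); last by rewrite h mxE.
by rewrite mxE; apply: eq_bigr => j _; rewrite mxE.
Qed.

Definition cp (q : bool) (x : 'cV[R]_n) : 'cV[R]_N :=
  \col_t \sum_(j : 'I_n | (odd j == q) && (hf j == t)) x j ord0.

Lemma Bcp q (x : 'cV[R]_n) t :
  (B *m cp q x) t ord0 = \sum_(j : 'I_n | odd j == q) B t (hf j) * x j ord0.
Proof.
rewrite mxE [RHS](partition_big hf predT) //=; apply: eq_bigr => t' _.
rewrite mxE mulr_sumr; apply: eq_bigr => j /andP[_ /eqP ->] //.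
Qed.

Lemma cp_recover (x : 'cV[R]_n) j : x j ord0 = cp (odd j) x (hf j) ord0.
Proof.
rewrite mxE (big_pred1 j) // => i; apply/idP/idP.
  by case/andP => /eqP oi /eqP hi; apply/eqP; apply: hf_inj.
by move/eqP ->; rewrite !eqxx.
Qed.

Lemma cp_sparse q (x : 'cV[R]_n) : ksparse k x -> ksparse k (cp q x).
Proof.
rewrite /ksparse => h; apply: leq_trans h; apply: leq_trans (leq_imset_card hf _).
apply: subset_leq_card; apply/subsetP => t; rewrite inE mxE => nz.
apply/imsetP; case: (pickP (fun j => (x j ord0 != 0) && (hf j == t))).
  by move=> j /andP[xj /eqP hj]; exists j; rewrite ?inE.
move=> none; case/negP: nz; apply/eqP; apply: big1 => j /andP[_ hj].
by move: (none j); rewrite hj andbT => /negbFE/eqP.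
Qed.

Lemma Am_id : identifies k Am.
Proof.
move=> x1 x2 s1 s2 ne; apply/negP => /eqP eqA.
pose z := x1 - x2.
have hz : Am *m z = 0 by rewrite mulmxBr eqA subrr.
have zC c : c \in Cen D -> z c ord0 = 0.
  move=> cC; have := z_rows hz (sing_in cC).
  rewrite (bigD1 c) //= inE eqxx mul1r big1 ?addr0 // => j jc.
  by rewrite inE (negbTE jc) mul0r.
have zT (q : bool) t : \sum_(j : 'I_n | odd j == q) B t (hf j) * z j ord0 = 0.
  have e1 := z_rows hz (rowM_in q t); have e2 := z_rows hz (base_in q).
  transitivity (\sum_j (j \in rowM q t)%:R * z j ord0 - \sum_j (j \in base q)%:R * z j ord0);
    last by rewrite e1 e2 subrr.
  rewrite -sumrB big_mkcond /=.
  apply: eq_bigr => j _.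
  case jC: (j \in Cen D); first by rewrite zC // !mulr0 subrr; case: ifP.
  rewrite /rowM /base !inE jC orbF /=.
  case: (zoB t (hf j)) => ->; rewrite ?oner_eq0 ?eqxx ?andbF ?andbT ?orbF;
    case: (odd j); case: (q); rewrite /= ?[0 == 1]eq_sym ?oner_eq0 /= ?mul0r ?mul1r ?subrr ?subr0 //.
have cpe q : cp q x1 = cp q x2.
  apply/eqP; apply: contraT => ne'; have := idB (cp_sparse q s1) (cp_sparse q s2) ne'.
  case/negP; apply/eqP/matrixP => t i; rewrite (ord1 i) !Bcp; apply/eqP.
  rewrite -subr_eq0 -sumrB; apply/eqP; rewrite -[RHS](zT q t); apply: eq_bigr => j _.
  by rewrite !mxE mulrBr.
case/negP: ne; apply/eqP/matrixP => j i; rewrite (ord1 i).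
by rewrite (cp_recover x1) (cp_recover x2) cpe.
Qed.

Lemma upper_ex : exists m, (m <= 2 * ME + #|D| + 2)%N /\ MG_pred R (G4del D) k m.
Proof.
exists (size rows); split.
  by rewrite /rows !size_cat !size_map /= -!cardE -enumT size_enum_ord card_Cen mul2n -addnn -!addnA !leq_add2l addnC.
apply: bool_ofT; exists Am; split; [exact: Am_mm | exact: Am_id].
Qed.
End Upper.


Theorem theorem4 (R : realFieldType) (n k h : nat) (D : {set 'I_n}) :
  (5 <= n)%N -> (1 <= k)%N -> (h <= n)%N -> #|D| = h ->
  (uphalf h <= MG R (G4del D) k)%N /\
  (MG R (G4del D) k <= 2 * MC R k (uphalf n) + h + 2)%N.
Proof.
move=> n5 k1 _ HD; split.
- rewrite /MG; case: ex_minnP => m /bool_ofP [A [mm idA]] _.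
  have := lower_main n5 k1 mm idA; rewrite HD => hm.
  apply: (@leq_trans (uphalf m.*2)); last by rewrite uphalf_double.
  by rewrite !uphalfE half_leq // ltnS -mul2n.
- rewrite /MC; case: ex_minnP => ME /bool_ofP [B [zoB idB]] _.
  have [m [mle Pm]] := upper_ex D n5 zoB idB.
  rewrite /MG; case: ex_minnP => m0 _ minm.
  by apply: leq_trans (minm _ Pm) _; rewrite -HD.
Qed.
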